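(* Fix $n\ge 2$ and let, for $1\le i\le n$, $(a_i,a_i',a_i'')$ be triples of regular closed subsets of $\mathbb{R}^2$ with $a_i''\neq\emptyset$, $a_i''\cap\overline{\mathbb{R}^2\setminus a_i'}=\emptyset$ and $a_i'\cap\overline{\mathbb{R}^2\setminus a_i}=\emptyset$, such that: $a_i'\cup a_{i+1}''\cup\dots\cup a_n''$ is connected for each $1\le i\le n-1$; $a_n'$ is connected; and $a_i\cap a_j=\emptyset$ for all $1\le i,j\le n$ with $j-i>1$. Then for every point $p_0\in a_1'$ and every point $p_n\in a_n''$ there exist points $p_1,\dots,p_{n-1}$ and Jordan arcs $\alpha_1,\dots,\alpha_n$ such that: (i) the concatenation $\alpha=\alpha_1\cdots\alpha_n$ is a Jordan arc from $p_0$ to $p_n$; (ii) $p_i\in a_{i+1}'\cap\alpha_i$ for all $1\le i<n$; and (iii) $\alpha_i\subseteq a_i$ for all $1\le i\le n$.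
   Context: A Jordan arc is a continuous injective map $[0,1]\to\mathbb{R}^2$ or a constant map, identified with its image. The concatenation $\alpha_1\cdots\alpha_n$ being a Jordan arc from $p_0$ to $p_n$ means each $\alpha_i$ ends where $\alpha_{i+1}$ begins, $\alpha_1$ starts at $p_0$, $\alpha_n$ ends at $p_n$, and the union traversed in order is a Jordan arc. *)

(* Defs.v *)
From HB Require Import structures.
From mathcomp Require Import all_boot all_order all_algebra.
From mathcomp Require Import all_classical all_reals all_analysis.
Set Implicit Arguments. Unset Strict Implicit. Unset Printing Implicit Defensive.
Import Order.TTheory GRing.Theory Num.Theory.
Import numFieldNormedType.Exports.
Local Open Scope classical_set_scope.
Local Open Scope ring_scope.

Definition regular_closed {T : topologicalType} (A : set T) : Prop :=
  closure (interior A) = A.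

Definition unit_itv (R : realType) : set R := [set t | 0 <= t <= 1].
Arguments unit_itv R : clear implicits.

Definition jordan_arc (R : realType) (f : R -> R * R) : Prop :=
  ({within (unit_itv R), continuous f} /\
   (forall s t, unit_itv R s -> unit_itv R t -> f s = f t -> s = t))
  \/ (exists c, forall t, unit_itv R t -> f t = c).

Definition trace (R : realType) (f : R -> R * R) : set (R * R) :=
  f @` unit_itv R.

(* The concatenation al 1 ... al n is a Jordan arc from p 0 to p n through
   p 1, ..., p (n-1): each al i is a Jordan arc from p (i-1) to p i, and the
   union traversed in order is a Jordan arc, i.e. there is one Jordan arc g
   from p 0 to p n and parameters 0 = t 0 <= t 1 <= ... <= t n = 1 with
   g (t i) = p i such that the trace of al i is g([t (i-1), t i]). *)
Definition concat_jordan_arc (R : realType) (n : nat)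
    (al : nat -> R -> R * R) (p : nat -> R * R) : Prop :=
  (forall i, (1 <= i <= n)%N ->
     jordan_arc (al i) /\ al i 0 = p i.-1 /\ al i 1 = p i) /\
  exists (g : R -> R * R) (t : nat -> R),
    [/\ jordan_arc g, g 0 = p 0%N, g 1 = p n, t 0%N = 0 & t n = 1] /\
    (forall i, (i < n)%N -> t i <= t i.+1) /\
    (forall i, (i <= n)%N -> g (t i) = p i) /\
    (forall i, (1 <= i <= n)%N ->
       trace (al i) = g @` [set s | t i.-1 <= s <= t i]).

(* Main.v *)
Require Import Defs.
From HB Require Import structures.
From mathcomp Require Import all_boot all_order all_algebra.
From mathcomp Require Import all_classical all_reals all_analysis.
From mathcomp Require Import ring lra.
Import Order.TTheory GRing.Theory Num.Theory.
Import numFieldNormedType.Exports.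
Local Open Scope classical_set_scope.
Local Open Scope ring_scope.

Section Basic.
Context {R : realType}.
Local Notation P := (R * R)%type.

Definition lin (a b : P) (s : R) : P := a + s *: (b - a).
Definition seg (a b : P) : set P := [set x | exists2 s, unit_itv R s & lin a b s = x].
Definition inj01 (f : R -> P) :=
  forall s t, unit_itv R s -> unit_itv R t -> f s = f t -> s = t.
Definition LLS (f : R -> P) := forall s, 0 < s <= 1 ->
  exists2 s', 0 <= s' < s & ((forall u, s' <= u <= s -> seg (f s') (f s) (f u)) /\
    (forall w, seg (f s') (f s) w -> exists2 u, s' <= u <= s & f u = w)).
Definition glue (f1 f2 : R -> P) (c : P) (s : R) : P :=
  f1 (Num.min (2 * s) 1) + f2 (Num.max (2 * s - 1) 0) - c.

Lemma lin0 a b : lin a b 0 = a.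
Proof. by rewrite /lin scale0r addr0. Qed.
Lemma lin1 a b : lin a b 1 = b.
Proof. by rewrite /lin scale1r addrC subrK. Qed.

Lemma cont_id : continuous (fun s : R => s).
Proof. by move=> x. Qed.

Lemma lin_cont a b : continuous (lin a b).
Proof.
rewrite /lin => s; apply: (@continuousD R P R (fun=> a) (fun s => s *: (b - a))).
  exact: cst_continuous.
apply: (@continuousZ R P R (fun s => s) (fun=> b - a)); first exact: cont_id.
exact: cst_continuous.
Qed.

Lemma glueL f1 f2 c s : f2 0 = c -> s <= 2^-1 -> glue f1 f2 c s = f1 (2 * s).
Proof.
move=> h2 hs; rewrite /glue.
have h1 : 2 * s <= 1 by rewrite -(@ler_pM2l _ 2^-1) ?invr_gt0 // mulrA mulVf // mul1r mulr1.
rewrite (min_idPl h1) (max_idPr _); last by rewrite subr_le0.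
by rewrite h2 addrK.
Qed.

Lemma glueR f1 f2 c s : f1 1 = c -> 2^-1 <= s -> glue f1 f2 c s = f2 (2 * s - 1).
Proof.
move=> h1 hs; rewrite /glue.
have h : 1 <= 2 * s by rewrite -(@ler_pM2l _ 2^-1) ?invr_gt0 // mulrA mulVf // mul1r mulr1.
rewrite (min_idPr h) (max_idPl _); last by rewrite subr_ge0.
by rewrite h1 addrC addKr.
Qed.
End Basic.
Section Basic2.
Context {R : realType}.
Local Notation P := (R * R)%type.

Lemma cont_min2 : continuous (fun s : R => Num.min (2 * s) 1).
Proof.
move=> s; apply: (@continuous_min R R (fun s => 2 * s) (fun=> 1)).
  apply: (@continuousM R R (fun=> 2) (fun s => s)); [exact: cst_continuous| exact: cont_id].
exact: cst_continuous.
Qed.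

Lemma cont_max2 : continuous (fun s : R => Num.max (2 * s - 1) 0).
Proof.
move=> s; apply: (@continuous_max R R (fun s => 2 * s - 1) (fun=> 0)); last exact: cst_continuous.
apply: (@continuousD R R^o R (fun s => 2 * s) (fun=> -1)); last exact: cst_continuous.
apply: (@continuousM R R (fun=> 2) (fun s => s)); [exact: cst_continuous| exact: cont_id].
Qed.

Lemma glue_cont (f1 f2 : R -> P) c : continuous f1 -> continuous f2 -> continuous (glue f1 f2 c).
Proof.
move=> h1 h2 s; rewrite /glue.
apply: (@continuousD R P R (fun s => f1 (Num.min (2 * s) 1) + f2 (Num.max (2 * s - 1) 0)) (fun=> - c)); last exact: cst_continuous.
apply: (@continuousD R P R (fun s => f1 (Num.min (2 * s) 1)) (fun s => f2 (Num.max (2 * s - 1) 0))).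
  exact: (continuous_comp (cont_min2 s) (h1 _)).
exact: (continuous_comp (cont_max2 s) (h2 _)).
Qed.

Lemma trunc_cont (f : R -> P) (tau : R) : continuous f -> continuous (fun s => f (tau * s)).
Proof.
move=> h s; apply: (continuous_comp _ (h _)).
apply: (@continuousM R R (fun=> tau) (fun s => s)); [exact: cst_continuous| exact: cont_id].
Qed.
End Basic2.
Section Basic3.
Context {R : realType}.
Local Notation P := (R * R)%type.

Lemma linE (a b : P) s : lin a b s = (a.1 + s * (b.1 - a.1), a.2 + s * (b.2 - a.2)).
Proof. by case: a b => [? ?] [? ?]. Qed.

Lemma lin_comb (y z : P) l t : lin (lin y z l) z t = lin y z (l + t * (1 - l)).
Proof. case: y z => [y1 y2] [z1 z2]; rewrite !linE /=; congr (_, _); ring. Qed.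

Lemma lin_sub (a b : P) s v : lin a (lin a b s) v = lin a b (v * s).
Proof. case: a b => [y1 y2] [z1 z2]; rewrite !linE /=; congr (_, _); ring. Qed.

Lemma lin_inj (a b : P) s t : a != b -> lin a b s = lin a b t -> s = t.
Proof.
move=> ab; rewrite /lin => /addrI /eqP; rewrite -subr_eq0 -scalerBl scaler_eq0 subr_eq0 subr_eq0.
by case/orP => /eqP // e; move: ab; rewrite e eqxx.
Qed.
End Basic3.
Section Basic4.
Context {R : realType}.
Local Notation P := (R * R)%type.

Lemma lin_inj01 (a b : P) : a != b -> inj01 (lin a b).
Proof. by move=> ab s t _ _; apply: lin_inj. Qed.

Lemma lin_LLS (a b : P) : LLS (lin a b).
Proof.
move=> s /andP[s0 s1]; exists 0; first by rewrite lexx s0.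
split.
  move=> u /andP[u0 us]; exists (u / s).
    rewrite /unit_itv /= divr_ge0 //=; last exact: ltW.
    by rewrite ler_pdivrMr // mul1r.
  by rewrite lin0 lin_sub mulfVK // gt_eqF.
move=> w [v /andP[v0 v1] <-]; exists (v * s); first by apply/andP; split; nra.
by rewrite lin0 lin_sub.
Qed.

Lemma trunc_inj (f : R -> P) (tau : R) : inj01 f -> 0 < tau <= 1 ->
  inj01 (fun s => f (tau * s)).
Proof.
move=> hf /andP[t0 t1] s t /andP[s0 s1] /andP[u0 u1] e.
have h : forall x : R, 0 <= x -> x <= 1 -> unit_itv R (tau * x).
  by move=> x x0 x1; apply/andP; split; nra.
have := hf _ _ (h s s0 s1) (h t u0 u1) e.
by move/mulfI; apply; rewrite gt_eqF.
Qed.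

Lemma trunc_LLS (f : R -> P) (tau : R) : LLS f -> 0 < tau <= 1 ->
  LLS (fun s => f (tau * s)).
Proof.
move=> hf /andP[t0 t1] s /andP[s0 s1].
have : 0 < tau * s <= 1 by apply/andP; split; nra.
case/hf => s'' /andP[h0 h1] [hu hw].
exists (s'' / tau).
  rewrite divr_ge0 ?(ltW t0) //= ltr_pdivrMr // mulrC //.
rewrite [tau * (s'' / tau)]mulrC divfK ?gt_eqF //; split.
  move=> u /andP[u0 u1].
  apply: hu; apply/andP; split; last by rewrite ler_pM2l.
  by rewrite -ler_pdivrMl // mulrC.
move=> w /hw [u /andP[u0 u1] <-]; exists (u / tau); last by rewrite mulrC divfK ?gt_eqF.
apply/andP; split; first by rewrite ler_pM2r ?invr_gt0.
by rewrite ler_pdivrMr // mulrC.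
Qed.
End Basic4.
Section Basic5.
Context {R : realType}.
Local Notation P := (R * R)%type.

Lemma glue_inj (f1 f2 : R -> P) c : inj01 f1 -> inj01 f2 -> f1 1 = c -> f2 0 = c ->
  (forall s t, unit_itv R s -> unit_itv R t -> f1 s = f2 t -> s = 1 /\ t = 0) ->
  inj01 (glue f1 f2 c).
Proof.
move=> i1 i2 e1 e2 cr s t /andP[s0 s1] /andP[t0 t1].
have uL : forall x : R, 0 <= x -> x <= 2^-1 -> unit_itv R (2 * x).
  by move=> x x0 x1; apply/andP; split; lra.
have uR : forall x : R, 2^-1 <= x -> x <= 1 -> unit_itv R (2 * x - 1).
  by move=> x x0 x1; apply/andP; split; lra.
case: (leP s 2^-1) => hs; case: (leP t 2^-1) => ht.
- rewrite !glueL // => e; have := i1 _ _ (uL _ s0 hs) (uL _ t0 ht) e; lra.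
- rewrite glueL // glueR ?(ltW ht) // => e.
  have [] := cr _ _ (uL _ s0 hs) (uR _ (ltW ht) t1) e; lra.
- rewrite glueR ?(ltW hs) // glueL // => e.
  have [] := cr _ _ (uL _ t0 ht) (uR _ (ltW hs) s1) (esym e); lra.
- rewrite !glueR ?(ltW hs) ?(ltW ht) // => e.
  have := i2 _ _ (uR _ (ltW hs) s1) (uR _ (ltW ht) t1) e; lra.
Qed.

Lemma glue_LLS (f1 f2 : R -> P) c : LLS f1 -> LLS f2 -> f1 1 = c -> f2 0 = c ->
  LLS (glue f1 f2 c).
Proof.
move=> l1 l2 e1 e2 s /andP[s0 s1].
case: (leP s 2^-1) => hs.
  have : 0 < 2 * s <= 1 by apply/andP; split; lra.
  case/l1 => s'' /andP[h0 h1] [hu hw].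
  exists (s'' / 2); first by apply/andP; split; lra.
  have hg : forall x, x <= 2^-1 -> glue f1 f2 c x = f1 (2 * x) by move=> x hx; exact: glueL.
  rewrite (hg (s'' / 2)); last lra.
  rewrite (hg s) //.
  have -> : 2 * (s'' / 2) = s'' by field.
  split.
    move=> u /andP[u0 u1].
    rewrite (hg u); last lra.
    apply: hu; apply/andP; split; lra.
  move=> w /hw [u /andP[u0 u1] <-]; exists (u / 2); first by apply/andP; split; lra.
  rewrite hg; last lra.
  by congr f1; field.
have : 0 < 2 * s - 1 <= 1 by apply/andP; split; lra.
case/l2 => s'' /andP[h0 h1] [hu hw].
exists ((s'' + 1) / 2); first by apply/andP; split; lra.
have hg : forall x, 2^-1 <= x -> glue f1 f2 c x = f2 (2 * x - 1) by move=> x hx; exact: glueR.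
rewrite (hg ((s'' + 1) / 2)); last lra.
rewrite (hg s); last lra.
have -> : 2 * ((s'' + 1) / 2) - 1 = s'' by field.
split.
  move=> u /andP[u0 u1].
  rewrite (hg u); last lra.
  apply: hu; apply/andP; split; lra.
move=> w /hw [u /andP[u0 u1] <-]; exists ((u + 1) / 2); first by apply/andP; split; lra.
rewrite hg; last lra.
by congr f2; field.
Qed.

Lemma glue_img1 (f1 f2 : R -> P) c a b : f2 0 = c -> 0 <= a -> a <= b -> b <= 1 ->
  glue f1 f2 c @` [set s | a / 2 <= s <= b / 2] = f1 @` [set s | a <= s <= b].
Proof.
move=> e2 a0 ab b1; apply/seteqP; split => x [s /andP[h1 h2] <-].
  rewrite glueL //; last lra.
  by exists (2 * s) => //; apply/andP; split; lra.
exists (s / 2); first by apply/andP; split; lra.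
rewrite glueL //; last lra.
by congr f1; field.
Qed.

Lemma glue_img2 (f1 f2 : R -> P) c : f1 1 = c ->
  glue f1 f2 c @` [set s | 2^-1 <= s <= 1] = f2 @` unit_itv R.
Proof.
move=> e1; apply/seteqP; split => x [s /andP[h1 h2] <-].
  rewrite glueR //.
  by exists (2 * s - 1) => //; apply/andP; split; lra.
exists ((s + 1) / 2); first by apply/andP; split; lra.
rewrite glueR //; last lra.
by congr f2; field.
Qed.
End Basic5.
Section Topo.
Context {R : realType}.
Local Notation P := (R * R)%type.

Lemma unit_itvE : unit_itv R = `[0, 1]%classic.
Proof. by apply/seteqP; split => x; rewrite /= in_itv. Qed.

Lemma unit_itv_closed : closed (unit_itv R).
Proof. rewrite unit_itvE; exact: itv_closed. Qed.

Lemma trace_compact (f : R -> P) : continuous f -> compact (f @` unit_itv R).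
Proof.
move=> hf; apply: continuous_compact; first exact: continuous_subspaceT.
rewrite unit_itvE; exact: segment_compact.
Qed.

Lemma trace_closed (f : R -> P) : continuous f -> closed (f @` unit_itv R).
Proof. by move=> hf; apply: compact_closed; [exact: norm_hausdorff | exact: trace_compact]. Qed.

Lemma closed_sup_mem (E : set R) (M : R) : closed E -> E !=set0 ->
  (forall x, E x -> x <= M) -> E (sup E).
Proof.
move=> cE nE ub; apply: (itv_closed_supremums nE cE); split.
  by apply: ub_le_sup; exists M.
by move=> y hy; apply: ge_sup.
Qed.

Lemma closed_inf_mem (E : set R) (M : R) : closed E -> E !=set0 ->
  (forall x, E x -> M <= x) -> E (inf E).
Proof.
move=> cE nE lb; apply: (itv_closed_infimums nE cE); split.
  by apply: ge_inf; exists M.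
by move=> y hy; apply: lb_le_inf.
Qed.

Lemma preim_closed (f : R -> P) (K : set P) : continuous f -> closed K ->
  closed [set s | unit_itv R s /\ K (f s)].
Proof.
move=> hf cK.
have -> : [set s | unit_itv R s /\ K (f s)] = unit_itv R `&` f @^-1` K by [].
apply: closedI; first exact: unit_itv_closed.
by apply: preimage_closed => // x _; apply: hf.
Qed.

Lemma first_hit (f : R -> P) (K : set P) : continuous f -> closed K ->
  K (f 1) -> ~ K (f 0) ->
  exists tau, [/\ 0 < tau <= 1, K (f tau) & forall s, 0 <= s < tau -> ~ K (f s)].
Proof.
move=> hf cK k1 k0.
set T := [set s | unit_itv R s /\ K (f s)].
have cT : closed T by exact: preim_closed.
have nT : T !=set0 by exists 1; split => //; rewrite /unit_itv /= ler01 lexx.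
have lb : forall x, T x -> 0 <= x by move=> x [/andP[]].
have [/andP[i0 i1] ki] := @closed_inf_mem T 0 cT nT lb.
exists (inf T); split => //.
  apply/andP; split => //; rewrite lt_neqAle i0 andbT.
  by apply/eqP => e; apply: k0; rewrite e.
move=> s /andP[s0 s1] ks.
have : inf T <= s.
  apply: ge_inf; first by exists 0.
  split => //; apply/andP; split => //; apply: ltW; exact: (lt_le_trans s1).
by rewrite leNgt s1.
Qed.
End Topo.
Section Ext.
Context {R : realType}.
Local Notation P := (R * R)%type.

Definition arc (f : R -> P) := [/\ continuous f, inj01 f & LLS f].

Definition reach (W A : set P) (p y : P) := exists f, [/\ arc f, f 0 = p, f 1 = y &
  forall s, 0 < s <= 1 -> W (f s) /\ ~ A (f s)].

Lemma trunc_arc (f : R -> P) tau : arc f -> 0 < tau <= 1 -> arc (fun s => f (tau * s)).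
Proof.
case=> fc fi fl ht; split; first exact: trunc_cont.
  exact: trunc_inj.
exact: trunc_LLS.
Qed.

Lemma reach_ext (W A : set P) p y z : A p -> reach W A p y ->
  (forall w, seg y z w -> W w /\ ~ A w) -> reach W A p z.
Proof.
case: (eqVneq y z) => [<- //| yz].
move=> Ap [f [[fc fi fl] f0 f1 fs]] hseg.
set I := [set l | unit_itv R l /\ (f @` unit_itv R) (lin y z l)].
have cI : closed I.
  by apply: preim_closed; [exact: lin_cont | exact: trace_closed].
have nI : I !=set0.
  exists 0; split; first by rewrite /unit_itv /= lexx ler01.
  by exists 1; [rewrite /unit_itv /= ler01 lexx | rewrite lin0].
have ubI : forall x, I x -> x <= 1 by move=> x [/andP[]].
have hsI : has_sup I by split => //; exists 1.
have [/andP[l0 l1] [sx /andP[sx0 sx1] fsx]] := @closed_sup_mem R I 1 cI nI ubI.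
set l := sup I in l0 l1 fsx.
set x := lin y z l in fsx.
have segx : seg y z x by exists l => //; apply/andP.
have [Wx nAx] := hseg _ segx.
have sxp : 0 < sx.
  rewrite lt_neqAle sx0 andbT; apply/eqP => e; apply: nAx.
  by rewrite -fsx -e f0.
have hsx : 0 < sx <= 1 by rewrite sxp sx1.
have af : arc f by split.
have harc1 := @trunc_arc f sx af hsx.
case: (eqVneq l 1) => [el | nl].
  exists (fun s => f (sx * s)); split => //.
  - by rewrite mulr0.
  - by rewrite mulr1 fsx /x el lin1.
  move=> s /andP[s0 s1]; apply: fs; apply/andP; split.
    exact: mulr_gt0.
  by rewrite mulr_ile1 // ltW.
have l1' : l < 1 by rewrite lt_neqAle nl l1.
have xz : x != z.
  apply/eqP => e; move: nl; rewrite -(lin1 y z) in e.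
  by rewrite (lin_inj _ _ _ _ yz e) eqxx.
have hlin := lin_comb y z l.
exists (glue (fun s => f (sx * s)) (lin x z) x); split.
- case: harc1 => c1 i1 ll1; split.
  + by apply: glue_cont => //; exact: lin_cont.
  + apply: glue_inj => //; first exact: lin_inj01.
    * by rewrite mulr1.
    * by rewrite lin0.
    move=> s t hs /andP[t0 t1] e.
    have Il : I (l + t * (1 - l)).
      split; first by apply/andP; split; nra.
      by exists (sx * s); [case/andP: hs => *; apply/andP; split; nra | rewrite e -hlin].
    have := sup_upper_bound hsI Il; rewrite -/l => hle.
    have t0' : t = 0 by nra.
    split => //; move: e; rewrite t0' lin0 -fsx => e.
    have hs' : unit_itv R (sx * s) by case/andP: hs => *; apply/andP; split; nra.
    have := fi _ _ hs' _ e; rewrite /unit_itv /= sx0 sx1 => /(_ erefl).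
    by move=> h; apply: (mulfI (x := sx)); rewrite ?gt_eqF // mulr1.
  + by apply: glue_LLS => //; [exact: lin_LLS | rewrite mulr1 | rewrite lin0].
- by rewrite glueL ?lin0 // ?mulr0 ?f0 //; lra.
- rewrite glueR.
  + have -> : 2 * 1 - 1 = 1 :> R by lra.
    exact: lin1.
  + by rewrite mulr1.
  + lra.
move=> s /andP[s0 s1].
case: (leP s 2^-1) => hs.
  rewrite glueL ?lin0 //; apply: fs; apply/andP; split; nra.
rewrite glueR ?mulr1 //; last exact: ltW.
apply: hseg; rewrite hlin.
by exists (l + (2 * s - 1) * (1 - l)) => //; apply/andP; split; nra.
Qed.
End Ext.
Arguments reach_ext {R W A p y z}.
Arguments first_hit {R f K}.
Arguments trunc_arc {R f tau}.
Section Step.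
Context {R : realType}.
Local Notation P := (R * R)%type.

Lemma open_ball {W : set P} {y : P} : open W -> W y -> exists2 e : R, 0 < e & ball y e `<=` W.
Proof. move=> oW Wy. have : nbhs y W by apply: open_nbhs_nbhs; split. by move/nbhs_ballP. Qed.

Lemma ballE (c x : P) e : ball c e x = (`|c - x| < e).
Proof. by rewrite -ball_normE. Qed.

Lemma closed1 (p : P) : closed [set p].
Proof. apply: compact_closed; first exact: norm_hausdorff. exact/finite_compact/finite_set1. Qed.

Lemma fstD (u v : P) : (u + v).1 = u.1 + v.1. Proof. by []. Qed.
Lemma sndD (u v : P) : (u + v).2 = u.2 + v.2. Proof. by []. Qed.
Lemma fstN (u : P) : (- u).1 = - u.1. Proof. by []. Qed.
Lemma sndN (u : P) : (- u).2 = - u.2. Proof. by []. Qed.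
Lemma fstZ (k : R) (u : P) : (k *: u).1 = k * u.1. Proof. by []. Qed.
Lemma sndZ (k : R) (u : P) : (k *: u).2 = k * u.2. Proof. by []. Qed.
Lemma pairP (u v : P) : u.1 = v.1 -> u.2 = v.2 -> u = v.
Proof. by case: u v => [? ?] [? ?] /= -> ->. Qed.

Lemma conv_lt (a b e s : R) : a < e -> b < e -> 0 <= s -> s <= 1 -> (1 - s) * a + s * b < e.
Proof.
move=> ha hb s0 s1.
have [->|s1'] := eqVneq s 1; first by rewrite subrr mul0r add0r mul1r.
have s1'' : s < 1 by rewrite lt_neqAle s1' s1.
nra.
Qed.

Lemma ball_convex {c x y w : P} {e : R} : ball c e x -> ball c e y -> seg x y w -> ball c e w.
Proof.
rewrite !ballE => hx hy [s /andP[s0 s1] <-].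
have -> : c - lin x y s = (1 - s) *: (c - x) + s *: (c - y).
  apply: pairP; rewrite linE !(fstD, sndD, fstN, sndN, fstZ, sndZ) /=; ring.
apply: (le_lt_trans (ler_normD _ _)); rewrite !normrZ !ger0_norm ?subr_ge0 //.
exact (conv_lt _ _ _ _ hx hy s0 s1).
Qed.

Lemma lin_arc (p x : P) : p != x -> arc (lin p x).
Proof. by move=> px; split; [exact: lin_cont | exact: lin_inj01 | exact: lin_LLS]. Qed.

Lemma seg_lin (a b : P) s : unit_itv R s -> seg a b (lin a b s).
Proof. by move=> h; exists s. Qed.

Lemma step (W F A K M : set P) (p : P) :
  open W -> closed F -> W `<=` F -> closed A -> A p -> W p ->
  (exists2 r : R, 0 < r & forall z, ball p r z -> ~ A z -> forall w, seg p z w -> A w -> w = p) ->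
  closed K -> ~ K p -> connected M -> M p ->
  (exists2 r : R, 0 < r & forall x, M x -> ball p r x -> x = p \/ (W x /\ ~ A x)) ->
  (forall x, M x -> x <> p -> (W x /\ ~ A x) \/ K° x \/ ~ F x) ->
  (exists y, M y /\ (K y \/ ~ F y)) ->
  exists f, [/\ arc f, f 0 = p, K (f 1),
     (forall s, 0 < s <= 1 -> W (f s) /\ ~ A (f s)) &
     (forall s, 0 <= s < 1 -> ~ K (f s))].
Proof.
move=> oW cF WF cA Ap Wp [r1 r10 vis] cK Kp cM Mp [r2 r20 hloc] HM [y0 [My0 Hy0]].
set C := [set y | reach W A p y].
have CW : forall y, C y -> W y /\ ~ A y.
  by move=> y [f [_ _ <- fs]]; apply: fs; rewrite ltr01 lexx.
have oWA : open (W `&` ~` A) by apply: openI => //; exact: closed_openC.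
have Cext : forall y z e, C y -> 0 < e -> ball y e `<=` W `&` ~` A -> ball y e z -> C z.
  move=> y z e Cy e0 sub yz; apply: (reach_ext Ap Cy) => w hw.
  exact: sub (ball_convex (ballxx y e0) yz hw).
have oC : open C.
  rewrite openE => y Cy; have [Wy nAy] := CW _ Cy.
  have [e e0 sub] := open_ball oWA (conj Wy nAy).
  rewrite /interior; apply/nbhs_ballP; exists e => // z yz; exact: Cext Cy e0 sub yz.
have clC : forall x, W x -> ~ A x -> closure C x -> C x.
  move=> x Wx nAx clx.
  have [e e0 sub] := open_ball oWA (conj Wx nAx).
  have [y [Cy xy]] : exists y, C y /\ ball x e y.
    have : nbhs x (ball x e) by apply/nbhs_ballP; exists e.
    by move/clx => [y [Cy hy]]; exists y.
  have [e' e'0 sub'] := open_ball oWA (CW _ Cy).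
  apply: (reach_ext Ap Cy) => w hw; apply: sub.
  exact: (ball_convex xy (ballxx x e0) hw).
have [[y [Cy Ky]]|nCK] := pselect (exists y, C y /\ K y).
  case: Cy => f [[fc fi fl] f0 f1 fs].
  have k1 : K (f 1) by rewrite f1.
  have k0 : ~ K (f 0) by rewrite f0.
  have [tau [/andP[t0 t1] Kt nKt]] := first_hit fc cK k1 k0.
  exists (fun s => f (tau * s)); split.
  - have af : arc f by split.
    by apply: trunc_arc => //; apply/andP.
  - by rewrite mulr0.
  - by rewrite mulr1.
  - move=> s /andP[s0 s1]; apply: fs; apply/andP; split; nra.
  - move=> s /andP[s0 s1]; apply: nKt; apply/andP; split; nra.
exfalso.
have [r3 r30 bW] := open_ball oW Wp.
set r := Num.min r1 (Num.min r2 r3).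
have r0 : 0 < r by rewrite !lt_min r10 r20 r30.
have rb : forall z, ball p r z -> [/\ ball p r1 z, ball p r2 z & ball p r3 z].
  move=> z; rewrite !ballE !lt_min => /and3P[*]; split => //.
have nearp : forall x, M x -> ball p r x -> x <> p -> C x.
  move=> x Mx bx xp; have [b1 b2 b3] := rb _ bx.
  case: (hloc _ Mx b2) => // -[Wx nAx].
  have px : p != x by apply/eqP => e; apply: xp.
  exists (lin p x); split; [exact: lin_arc | exact: lin0 | exact: lin1 |].
  move=> s /andP[s0 s1].
  have hs : unit_itv R s by apply/andP; split => //; exact: ltW.
  split; first exact: bW (ball_convex (ballxx _ r30) b3 (seg_lin p x s hs)).
  move=> Aw; have := vis _ b1 nAx _ (seg_lin p x s hs) Aw.
  rewrite -{2}(lin0 p x) => /(lin_inj _ _ _ _ px) e.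
  by move: s0; rewrite e ltxx.
set X := M `&` (C `|` [set p]).
have XM : X = M.
  apply: cM.
  - by exists p; split => //; right.
  - exists (C `|` ball p r); first by apply: openU => //; exact: ball_open.
    apply/seteqP; split => x.
      case=> Mx [Cx|->]; split => //; [by left | by right; exact: ballxx].
    case=> Mx [Cx|bx]; split => //; first by left.
    have [->|xp] := pselect (x = p); first by right.
    by left; apply: nearp.
  - exists (closure C `|` [set p]); first by apply: closedU; [exact: closed_closure | exact: closed1].
    apply/seteqP; split => x.
      by case=> Mx [Cx|->]; split => //; [left; exact: subset_closure | right].
    case=> Mx [clx|->]; split => //; last by right.
    have [->|xp] := pselect (x = p); first by right.
    left; case: (HM _ Mx xp) => [[Wx nAx]|[Kx|nFx]]; first exact: clC.
    + exfalso; apply: nCK; move: (clx _ Kx) => [z [Cz Kz]].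
      by exists z; split => //; exact: interior_subset.
    + exfalso; apply: nFx.
      have : closure C `<=` closure F by apply: closure_subset => z /CW [/WF].
      by move/(_ _ clx); rewrite -(closure_id F).1.
have : X y0 by rewrite XM.
case=> _ [Cy0|ey0].
  case: Hy0 => [Ky0|nFy0]; first by apply: nCK; exists y0.
  by apply: nFy0; apply: WF; case: (CW _ Cy0).
case: Hy0; rewrite ey0 //.
by move=> nFp; apply: nFp; apply: WF.
Qed.
End Step.
Section Vis.
Context {R : realType}.
Local Notation P := (R * R)%type.

Definition vis (A : set P) (p : P) := exists2 r : R, 0 < r &
  forall z, ball p r z -> ~ A z -> forall w, seg p z w -> A w -> w = p.

Lemma vis1 (p : P) : vis [set p] p.
Proof. by exists 1 => // z _ _ w _ ->. Qed.

Lemma img_closed (f : R -> P) (a b : R) : continuous f -> closed (f @` [set s | a <= s <= b]).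
Proof.
move=> hf; apply: compact_closed; first exact: norm_hausdorff.
have -> : [set s | a <= s <= b] = `[a, b]%classic by apply/seteqP; split => x; rewrite /= in_itv.
apply: continuous_compact; first exact: continuous_subspaceT.
exact: segment_compact.
Qed.

Lemma vis_arc (f : R -> P) : arc f -> vis (trace f) (f 1).
Proof.
case=> fc fi fl.
have [s' /andP[s0 s1'] [hu hw]] := fl 1 (introT andP (conj ltr01 (lexx 1))).
set A0 := f @` [set s | 0 <= s <= s'].
have cA0 : closed A0 by exact: img_closed.
have nA0 : ~ A0 (f 1).
  case=> t /andP[t0 t1] e.
  have ht : unit_itv R t by apply/andP; split => //; lra.
  have h1 : unit_itv R 1 by apply/andP; split; lra.
  have := fi t 1 ht h1 e; lra.
have [r r0 sub] := open_ball (closed_openC cA0) nA0.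
exists r => // z bz nz w hw' [t /andP[t0 t1] ew].
have bw : ball (f 1) r w := ball_convex (ballxx _ r0) bz hw'.
case: (leP t s') => ts.
  by exfalso; apply: (sub _ bw); exists t => //; apply/andP.
have := hu t (introT andP (conj (ltW ts) t1)); rewrite ew.
set p := f 1; set u := f s'.
have bu : ~ ball p r u by move=> /sub; apply; exists s' => //; apply/andP.
case: hw' => l /andP[l0 l1] el [m /andP[m0 m1] em].
have [l0e|l0'] := eqVneq l 0; first by rewrite -el l0e lin0.
have [em1|m1'] := eqVneq m 1; first by rewrite -em em1 lin1.
exfalso.
have lp : 0 < l by rewrite lt_neqAle eq_sym l0' l0.
have mp : m < 1 by rewrite lt_neqAle m1' m1.
set c := (1 - m) / l.
have cp : 0 < c by apply: divr_gt0; lra.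
have ez : z = p + c *: (u - p).
  move: el em; rewrite !linE => el em.
  have e1 := f_equal fst (etrans el (esym em)); have e2 := f_equal snd (etrans el (esym em)).
  move: e1 e2 => /= e1 e2.
  apply: pairP; rewrite !(fstD, sndD, fstN, sndN, fstZ, sndZ) /c.
    apply: (mulfI (x := l)); first by rewrite gt_eqF.
    rewrite mulrDr [l * (_ * _)]mulrA mulrCA mulfV ?gt_eqF // mulr1.
    lra.
  apply: (mulfI (x := l)); first by rewrite gt_eqF.
  rewrite mulrDr [l * (_ * _)]mulrA mulrCA mulfV ?gt_eqF // mulr1.
  lra.
case: (leP c 1) => c1.
  apply: nz.
  have : seg u p z.
    exists (1 - c); first by apply/andP; split; lra.
    rewrite ez; apply: pairP; rewrite linE !(fstD, sndD, fstN, sndN, fstZ, sndZ) /=; ring.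
  case/hw => v /andP[v0 v1] <-; exists v => //; apply/andP; split => //; lra.
apply: bu; move: bz; rewrite !ballE ez.
have -> : p - (p + c *: (u - p)) = c *: (p - u).
  apply: pairP; rewrite !(fstD, sndD, fstN, sndN, fstZ, sndZ) /=; ring.
rewrite normrZ gtr0_norm // => h.
have hn := normr_ge0 (p - u).
apply: (le_lt_trans _ h).
rewrite -[X in X <= _]mul1r; apply: ler_wpM2r => //; exact: ltW.
Qed.
End Vis.
Section Concat.
Context {R : realType}.
Local Notation P := (R * R)%type.

Definition Gdata (k : nat) (p : nat -> P) (al : nat -> R -> P) (G : R -> P) (t : nat -> R) : Prop :=
  [/\ continuous G, jordan_arc G, G 0 = p 0%N, G 1 = p k & t 0%N = 0] /\
  [/\ t k = 1, (forall i, (i < k)%N -> t i <= t i.+1), (forall i, (i <= k)%N -> G (t i) = p i),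
      (forall i, (1 <= i <= k)%N -> trace (al i) = G @` [set s | t i.-1 <= s <= t i]) &
      (forall i, (i <= k)%N -> 0 <= t i <= 1)].

Lemma img_const (f : R -> P) (a b : R) c : a <= b -> (forall s, a <= s <= b -> f s = c) ->
  f @` [set s | a <= s <= b] = [set c].
Proof.
move=> ab hf; apply/seteqP; split => x.
  by case=> s hs <-; rewrite /= hf.
have ha : a <= a <= b by rewrite lexx ab.
by move=> ->; exists a => //; apply: hf.
Qed.

Lemma img_pt (f : R -> P) (a : R) : f @` [set s | a <= s <= a] = [set f a].
Proof. by apply: img_const => // s /andP[h1 h2]; congr f; apply/eqP; rewrite eq_le h1 h2. Qed.

Lemma neq_lt (i k : nat) : (i <= k)%N -> (i == k.+1) = false.
Proof. by move=> h; apply: ltn_eqF; rewrite ltnS. Qed.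

Lemma pred_lt {i k : nat} : (0 < i)%N -> (i <= k)%N -> (i.-1 < k)%N.
Proof. by case: i. Qed.

Lemma concat_step k p al G t (q : P) (b : R -> P) :
  Gdata k p al G t -> continuous b -> b 0 = p k -> b 1 = q ->
  (inj01 b \/ (forall s, b s = p k)) ->
  (inj01 G -> inj01 b -> forall s u, unit_itv R s -> unit_itv R u -> G s = b u -> s = 1 /\ u = 0) ->
  exists G' t', Gdata k.+1 (fun i => if i == k.+1 then q else p i)
                           (fun i => if i == k.+1 then b else al i) G' t' /\
    (forall s, unit_itv R s -> (exists2 u, unit_itv R u & G' s = b u) \/
                               (exists2 u, unit_itv R u & G' s = G u)).
Proof.
move=> [[Gc Gj G0 G1 t0] [tk tm Gt tr tb]] bc b0 b1 hb cross.
have u01 : unit_itv R 0 by rewrite /unit_itv /= lexx ler01.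
have u11 : unit_itv R 1 by rewrite /unit_itv /= lexx ler01.
case: hb => [binj|bcst].
  case: (pselect (inj01 G)) => [Ginj|nGinj].
  exists (glue G b (p k)), (fun i => if i == k.+1 then 1 else t i / 2); split; last first.
    move=> s /andP[s0 s1]; case: (leP s 2^-1) => hs.
      right; exists (2 * s); first by apply/andP; split; lra.
      by rewrite glueL.
    left; exists (2 * s - 1); first by apply/andP; split; lra.
    by rewrite glueR //; exact: ltW.
  split; split.
  - exact: glue_cont.
  - left; split; first by apply: continuous_subspaceT; exact: glue_cont.
    by apply: glue_inj => //; exact: cross.
  - by rewrite glueL ?mulr0 //; lra.
  - rewrite eqxx glueR //; last lra.
    by have -> : 2 * 1 - 1 = 1 :> R by lra.
  - by rewrite /= t0 mul0r.
  - by rewrite eqxx.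
  - move=> i; rewrite ltnS leq_eqVlt => /orP[/eqP ->|ik].
      rewrite eqxx neq_lt // tk; lra.
    rewrite neq_lt ?neq_lt //; last exact: ltnW.
    have := tm _ ik; lra.
  - move=> i; rewrite leq_eqVlt => /orP[/eqP ->|ik]; first by rewrite eqxx glueR //; [have -> : 2 * 1 - 1 = 1 :> R by lra | lra].
    rewrite ltnS in ik; rewrite neq_lt // glueL //.
      have -> : 2 * (t i / 2) = t i by field.
      exact: Gt.
    by have := tb _ ik; lra.
  - move=> i /andP[i1]; rewrite leq_eqVlt => /orP[/eqP ->|ik].
      rewrite eqxx /= neq_lt // tk.
      rewrite /trace -(glue_img2 G b (p k) G1).
      by congr image; apply/seteqP; split => x /=; have -> : 1 / 2 = 2^-1 :> R by rewrite mul1r.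
    rewrite ltnS in ik; rewrite !neq_lt //; last by apply: (leq_trans (leq_pred _)).
    rewrite tr ?i1 //.
    have h1 := tb _ ik; have h0 := tb i.-1 (leq_trans (leq_pred _) ik).
    have hm : t i.-1 <= t i by have := tm i.-1 (pred_lt i1 ik); rewrite prednK.
    by rewrite glue_img1 //; lra.
  - move=> i; rewrite leq_eqVlt => /orP[/eqP ->|ik]; first by rewrite eqxx lexx ler01.
    rewrite ltnS in ik; rewrite neq_lt //; have := tb _ ik; lra.
  have [c hc] : exists c, forall s, unit_itv R s -> G s = c.
    by case: Gj => // -[_ Ginj]; exfalso; apply: nGinj.
  have pk : p k = c by rewrite -G1 hc.
  have p0 : p 0%N = c by rewrite -G0 hc.
  exists b, (fun i => if i == k.+1 then 1 else 0); split; last first.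
    by move=> s hs; left; exists s.
  split; split.
  - exact: bc.
  - by left; split => //; exact: continuous_subspaceT.
  - by rewrite b0 pk.
  - by rewrite eqxx.
  - by [].
  - by rewrite eqxx.
  - by move=> i; rewrite ltnS => ik; rewrite neq_lt //; case: ifP => _; rewrite ?lexx ?ler01.
  - move=> i; rewrite leq_eqVlt => /orP[/eqP ->|ik]; first by rewrite eqxx.
    rewrite ltnS in ik; rewrite neq_lt // b0 pk -(Gt _ ik) hc //.
    by have := tb _ ik; case/andP => *; apply/andP.
  - move=> i /andP[i1]; rewrite leq_eqVlt => /orP[/eqP ->|ik].
      by rewrite eqxx /= neq_lt.
    rewrite ltnS in ik; rewrite !neq_lt //; last by apply: (leq_trans (leq_pred _)).
    rewrite img_pt b0 pk tr ?i1 //.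
    have h1 := tb _ ik; have h0 := tb i.-1 (leq_trans (leq_pred _) ik).
    have hm : t i.-1 <= t i by have := tm i.-1 (pred_lt i1 ik); rewrite prednK.
    apply: img_const => // s /andP[s0 s1]; apply: hc; apply/andP; split; lra.
  - by move=> i _; case: (i == k.+1); rewrite lexx ler01.
have qk : q = p k by rewrite -b1 bcst.
exists G, (fun i => if i == k.+1 then 1 else t i); split; last first.
  by move=> s hs; right; exists s.
split; split => //.
- by rewrite eqxx qk.
- by rewrite eqxx.
- move=> i; rewrite ltnS leq_eqVlt => /orP[/eqP ->|ik].
    by rewrite eqxx neq_lt // tk.
  by rewrite !neq_lt //; [exact: tm | exact: ltnW].
- move=> i; rewrite leq_eqVlt => /orP[/eqP ->|ik]; first by rewrite eqxx G1 qk.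
  by rewrite ltnS in ik; rewrite neq_lt // Gt.
- move=> i /andP[i1]; rewrite leq_eqVlt => /orP[/eqP ->|ik].
    rewrite eqxx /= neq_lt // tk img_pt G1.
    rewrite /trace; apply: img_const; first exact: ler01.
    by move=> s _; rewrite bcst.
  rewrite ltnS in ik; rewrite !neq_lt //; last by apply: (leq_trans (leq_pred _)).
  by apply: tr; rewrite i1.
- move=> i; rewrite leq_eqVlt => /orP[/eqP ->|ik]; first by rewrite eqxx lexx ler01.
  by rewrite ltnS in ik; rewrite neq_lt // tb.
Qed.
End Concat.
Section Main.
Context {R : realType} (n : nat) (a a' a'' : nat -> set (R * R)).
Local Notation P := (R * R)%type.
Context (hn : (2 <= n)%N)
  (H1 : forall i, (1 <= i <= n)%N ->
     regular_closed (a i) /\ regular_closed (a' i) /\ regular_closed (a'' i) /\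
     a'' i !=set0 /\
     a'' i `&` closure (~` a' i) = set0 /\
     a' i `&` closure (~` a i) = set0)
  (Hc : forall i, (1 <= i <= n.-1)%N ->
     connected (a' i `|` \bigcup_(j in [set j | (i < j <= n)%N]) a'' j))
  (Hcn : connected (a' n))
  (Hd : forall i j, (1 <= i <= n)%N -> (1 <= j <= n)%N -> (i.+1 < j)%N ->
     a i `&` a j = set0)
  (p0 pn : P) (hp0 : a' 1%N p0) (hpn : a'' n pn).

Lemma sub_int (A B : set P) : A `&` closure (~` B) = set0 -> A `<=` B°.
Proof.
move=> h x Ax; apply: contrapT => nBx.
have : (A `&` closure (~` B)) x by split => //; rewrite closure_setC.
by rewrite h.
Qed.

Lemma rc_closed (A : set P) : regular_closed A -> closed A.
Proof. by rewrite /regular_closed => <-; exact: closed_closure. Qed.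

Lemma a'_int {i} : (1 <= i <= n)%N -> a' i `<=` (a i)°.
Proof. by move=> hi; apply: sub_int; have [_ [_ [_ [_ [_ h]]]]] := H1 _ hi. Qed.

Lemma a''_int {i} : (1 <= i <= n)%N -> a'' i `<=` (a' i)°.
Proof. by move=> hi; apply: sub_int; have [_ [_ [_ [_ [h _]]]]] := H1 _ hi. Qed.

Lemma a'_a {i} : (1 <= i <= n)%N -> a' i `<=` a i.
Proof. by move=> hi x /(a'_int hi) /interior_subset. Qed.

Lemma a''_a' {i} : (1 <= i <= n)%N -> a'' i `<=` a' i.
Proof. by move=> hi x /(a''_int hi) /interior_subset. Qed.

Lemma a''_a {i} : (1 <= i <= n)%N -> a'' i `<=` a i.
Proof. by move=> hi x /(a''_a' hi) /(a'_a hi). Qed.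

Lemma a_closed {i} : (1 <= i <= n)%N -> closed (a i).
Proof. by move=> hi; apply: rc_closed; have [h _] := H1 _ hi. Qed.
Lemma a'_closed {i} : (1 <= i <= n)%N -> closed (a' i).
Proof. by move=> hi; apply: rc_closed; have [_ [h _]] := H1 _ hi. Qed.
Lemma a''_closed {i} : (1 <= i <= n)%N -> closed (a'' i).
Proof. by move=> hi; apply: rc_closed; have [_ [_ [h _]]] := H1 _ hi. Qed.

Lemma dis {i j x} : (1 <= i <= n)%N -> (1 <= j <= n)%N -> (i.+1 < j)%N -> a i x -> a j x -> False.
Proof. by move=> hi hj hij ai aj; have := Hd _ _ hi hj hij; move/seteqP => [/(_ x (conj ai aj))]. Qed.

Definition B i := \bigcup_(j in [set j | (i < j <= n)%N]) a'' j.

Lemma B_closed i : closed (B i).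
Proof.
apply: closed_bigcup.
  apply: (@sub_finite_set _ _ `I_n.+1); last exact: finite_II.
  by move=> j /andP[_ jn]; rewrite /= ltnS.
move=> j /andP[ij jn]; apply: a''_closed; rewrite jn andbT.
by apply: leq_ltn_trans ij.
Qed.
Definition Kf i : set P := if (i < n)%N then a' i.+1 else [set pn].

Lemma Kf_closed i : (1 <= i <= n)%N -> closed (Kf i).
Proof.
move=> /andP[i1 iN]; rewrite /Kf; case: ifP => h; last exact: closed1.
by apply: a'_closed; rewrite h andbT.
Qed.

Lemma next_arc i (p : P) (A : set P) : (1 <= i <= n)%N -> closed A -> A p -> vis A p -> a' i p ->
  (forall x, A x -> a' i x -> x = p) ->
  (~ Kf i p -> (i < n)%N -> ~ B i p) ->
  exists b : R -> P, [/\ continuous b, b 0 = p, Kf i (b 1), trace b `<=` a i &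
    [/\ (inj01 b /\ (forall s, 0 < s <= 1 -> ~ A (b s))) \/ (forall s, b s = p),
        (forall x, trace b x -> (i < n)%N -> a' i.+1 x -> x = b 1) &
        vis (trace b) (b 1)]].
Proof.
move=> hi cA Ap vAp a'p Aa' nB.
have hi' := hi; case/andP: hi' => i1 iN.
have u01 : unit_itv R 0 by rewrite /unit_itv /= lexx ler01.
have u11 : unit_itv R 1 by rewrite /unit_itv /= lexx ler01.
have [Kp|nKp] := pselect (Kf i p).
  exists (fun=> p); split => //.
  - exact: cst_continuous.
  - by move=> x [s _ <-]; exact: (a'_a hi).
  have tr : trace (fun=> p) = [set p] :> set P by apply: img_const; [exact: ler01|].
  split; [by right | by move=> x; rewrite tr => -> | by rewrite tr; exact: vis1].
have hnn : (1 <= n <= n)%N by rewrite leqnn andbT; exact: ltnW.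
have [_ [_ [_ [[y0 y0a] _]]]] := H1 _ hnn.
have ha' : forall x, a' i x -> x = p \/ ((a i)° x /\ ~ A x).
  move=> x a'x; have [Ax|nAx] := pselect (A x); first by left; exact: Aa'.
  by right; split => //; exact: a'_int.
set M := if (i < n)%N then a' i `|` B i else a' i.
have cM : connected M.
  rewrite /M; case: ifP => h.
    by apply: Hc; rewrite i1 /= -ltnS prednK // (leq_trans _ hn).
  have -> : i = n by apply/eqP; rewrite eqn_leq iN leqNgt h.
  exact: Hcn.
have Mp : M p by rewrite /M; case: ifP => _; [left|].
have hloc : exists2 r : R, 0 < r & forall x, M x -> ball p r x -> x = p \/ ((a i)° x /\ ~ A x).
  rewrite /M; case: ifP => h; last by exists 1 => // x /ha'.
  have nBp := nB nKp h.
  have [r r0 sub] := open_ball (closed_openC (B_closed i)) nBp.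
  exists r => // x [/ha' //|Bx] bx.
  by exfalso; exact: (sub _ bx).
have HM : forall x, M x -> x <> p -> ((a i)° x /\ ~ A x) \/ (Kf i)° x \/ ~ a i x.
  move=> x Mx xp.
  have h1 : a' i x -> ((a i)° x /\ ~ A x) \/ (Kf i)° x \/ ~ a i x.
    by case/ha' => [//|h]; left.
  move: Mx; rewrite /M; case: ifP => h; last exact: h1.
  case=> [a'x|[j /andP[ij jn] xj]]; first exact: h1 a'x.
  have hj : (1 <= j <= n)%N by rewrite jn andbT (ltn_trans i1 ij).
  case: (eqVneq j i.+1) => [ej|nej].
    right; left; rewrite /Kf h -ej; exact: a''_int.
  right; right => aix.
  have ij' : (i.+1 < j)%N by rewrite ltn_neqAle eq_sym nej ij.
  exact: (dis hi hj ij' aix (a''_a hj _ xj)).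
have hout : exists y, M y /\ (Kf i y \/ ~ a i y).
  rewrite /M /Kf; case: ifP => h.
    exists y0; split; first by right; exists n => //; apply/andP; split.
    case: (eqVneq n i.+1) => [en|nen].
      by left; rewrite -en; exact: a''_a' y0a.
    right => aiy.
    have ij' : (i.+1 < n)%N by rewrite ltn_neqAle eq_sym nen h.
    exact: (dis hi hnn ij' aiy (a''_a hnn _ y0a)).
  exists pn; split; last by left.
  have -> : i = n by apply/eqP; rewrite eqn_leq iN leqNgt h.
  exact: a''_a' hpn.
have [f [af f0 f1 fW fK]] := step (a i)° (a i) A (Kf i) M p (@open_interior _ _) (a_closed hi)
  (@interior_subset _ _) cA Ap (a'_int hi _ a'p) vAp (Kf_closed _ hi) nKp cM Mp hloc HM hout.
exists f; split => //.
- by case: af.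
- move=> x [s /andP[s0 s1] <-].
  have [e0|s0'] := eqVneq s 0; first by rewrite e0 f0; exact: a'_a.
  have hs : 0 < s <= 1 by rewrite s1 andbT lt_neqAle eq_sym s0' s0.
  exact: interior_subset ((fW s hs).1).
split.
- left; split; first by case: af.
  by move=> s hs; apply: (fW s hs).2.
- move=> x [s /andP[s0 s1] <-] h a'x.
  have [e1|s1'] := eqVneq s 1; first by rewrite e1.
  exfalso; apply: (fK s); first by rewrite s0 lt_neqAle s1' s1.
  by rewrite /Kf h.
- exact: vis_arc.
Qed.
Definition Stage k := exists p al G t,
  [/\ Gdata k p al G t, p 0%N = p0,
      (forall i, (1 <= i <= k)%N -> [/\ jordan_arc (al i), al i 0 = p i.-1, al i 1 = p i &
                                        trace (al i) `<=` a i]),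
      (forall i, (1 <= i <= k)%N -> (i < n)%N -> a' i.+1 (p i)) &
      [/\ continuous (al k), (forall x, trace (al k) x -> (k < n)%N -> a' k.+1 x -> x = p k),
          vis (trace (al k)) (p k), ((n <= k)%N -> p k = pn) &
          (forall s, unit_itv R s -> trace (al k) (G s) \/ exists2 i, (1 <= i < k)%N & a i (G s))]].

Lemma jordan_of (b : R -> P) c : continuous b ->
  (inj01 b /\ (forall s, 0 < s <= 1 -> ~ c (b s))) \/ (forall s, b s = b 0) -> jordan_arc b.
Proof.
move=> bc [[bi _]|bcst]; first by left; split => //; exact: continuous_subspaceT.
by right; exists (b 0) => s _; exact: bcst.
Qed.

Lemma stage1 : Stage 1.
Proof.
have h1 : (1 <= 1 <= n)%N by rewrite leqnn (leq_trans _ hn).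
have Ap : [set p0] p0 by [].
have nB : ~ Kf 1 p0 -> (1 < n)%N -> ~ B 1 p0.
  move=> nK h1n [j /andP[j1 jn] hj].
  have hj' : (1 <= j <= n)%N by rewrite jn (ltn_trans _ j1).
  case: (eqVneq j 2) => [ej|nej].
    subst j; apply: nK; rewrite /Kf h1n /=; exact: (a''_a' hj').
  have ij : (2 < j)%N by rewrite ltn_neqAle eq_sym nej j1.
  exact: (dis h1 hj' ij (a'_a h1 _ hp0) (a''_a hj' _ hj)).
have [b [bc b0 bK btr [bj bL bv]]] := next_arc 1 p0 [set p0] h1 (closed1 p0) Ap (vis1 p0) hp0
  (fun x e _ => e) nB.
have jb : jordan_arc b.
  by apply: (@jordan_of b [set p0] bc); case: bj => [h|h]; [left | right => s; rewrite b0 h].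
exists (fun i => if i == 1%N then b 1 else p0), (fun _ => b), b, (fun i => if i == 0%N then 0 else 1).
split => //.
- split; split => //.
  + by case => [|[|i]] //.
  + by case => [|[|i]] //.
  + by move=> i /andP[i1 i2]; have -> : i = 1%N by apply/eqP; rewrite eqn_leq i1 i2.
  + by case => [|[|i]] //= _; rewrite ?lexx ?ler01.
- move=> i /andP[i1 i2]; have -> : i = 1%N by apply/eqP; rewrite eqn_leq i1 i2.
  by split.
- move=> i /andP[i1 i2]; have -> : i = 1%N by apply/eqP; rewrite eqn_leq i1 i2.
  by move=> h; move: bK; rewrite /Kf h.
rewrite eqxx; split.
- exact: bc.
- by move=> x tx h; apply: bL.
- exact: bv.
- by move=> hn1; have := leq_trans hn hn1.
- by move=> s hs; left; exists s.
Qed.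
Lemma stageS k : (1 <= k < n)%N -> Stage k -> Stage k.+1.
Proof.
case/andP=> k1 kn [p [al [G [t [Gd pz alP a'P [alc L1 vk pnk img]]]]]].
have hk : (1 <= k <= n)%N by rewrite k1 ltnW.
have hk1 : (1 <= k.+1 <= n)%N by rewrite kn.
have u11 : unit_itv R 1 by rewrite /unit_itv /= lexx ler01.
have [jk alk0 alk1 alka] := alP k (introT andP (conj k1 (leqnn k))).
set A := trace (al k).
have cA : closed A by exact: trace_closed.
have Ak : A (p k) by exists 1.
have a'k := a'P k (introT andP (conj k1 (leqnn k))) kn.
have L1' : forall x, A x -> a' k.+1 x -> x = p k by move=> x Ax; exact: L1.
have nB : ~ Kf k.+1 (p k) -> (k.+1 < n)%N -> ~ B k.+1 (p k).
  move=> _ _ [j /andP[j1 jn] hj].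
  have hj' : (1 <= j <= n)%N by rewrite jn (ltn_trans _ j1).
  exact: (dis hk hj' j1 (alka _ Ak) (a''_a hj' _ hj)).
have [b [bc b0 bK btr [bj bL bv]]] := next_arc k.+1 (p k) A hk1 cA Ak vk a'k L1' nB.
have bj' : inj01 b \/ (forall s, b s = p k) by case: bj => [[]|]; [left | right].
have cross : inj01 G -> inj01 b -> forall s u, unit_itv R s -> unit_itv R u -> G s = b u -> s = 1 /\ u = 0.
  move=> Ginj binj s u hs hu e.
  have [u0|u0'] := eqVneq u 0.
    split => //; apply: Ginj => //.
    by rewrite e u0 b0; case: Gd => -[_ _ _ -> _].
  exfalso.
  have up : 0 < u <= 1 by case/andP: hu => h1 h2; rewrite h2 andbT lt_neqAle eq_sym u0' h1.
  have nAb : ~ A (b u).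
    case: bj => [[_ h]|bcst]; first exact: h.
    have u01 : unit_itv R 0 by rewrite /unit_itv /= lexx ler01.
    have := binj 0 1 u01 u11; rewrite !bcst => /(_ erefl) /eqP; rewrite eq_sym oner_eq0.
    by [].
  case: (img s hs) => [AG|[i /andP[i1 ik] aiG]]; first by apply: nAb; rewrite -e.
  have hi : (1 <= i <= n)%N by rewrite i1 (leq_trans (ltnW ik) (ltnW kn)).
  have ik' : (i.+1 < k.+1)%N by rewrite ltnS.
  apply: (dis hi hk1 ik' aiG); rewrite e; apply: btr; exists u.
    by case/andP: up => *; apply/andP; split => //; exact: ltW.
  by [].
have [G' [t' [Gd' himg]]] := @concat_step _ k p al G t (b 1) b Gd bc b0 erefl bj' cross.
exists (fun i => if i == k.+1 then b 1 else p i), (fun i => if i == k.+1 then b else al i), G', t'.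
split => //.
- move=> i /andP[i1]; rewrite leq_eqVlt => /orP[/eqP ->|ik].
    rewrite eqxx /= neq_lt //; split => //.
    by apply: (@jordan_of b A bc); case: bj => [h|h]; [left | right => s; rewrite b0 h].
  rewrite ltnS in ik; rewrite !neq_lt //; last exact: (leq_trans (leq_pred _)).
  by apply: alP; rewrite i1.
- move=> i /andP[i1]; rewrite leq_eqVlt => /orP[/eqP ->|ik] h.
    by rewrite eqxx; move: bK; rewrite /Kf h.
  rewrite ltnS in ik; rewrite neq_lt //.
  by apply: a'P => //; rewrite i1.
rewrite eqxx; split.
- exact: bc.
- by move=> x tx h; apply: bL.
- exact: bv.
- move=> hn1; have ek : k.+1 = n by apply/eqP; rewrite eqn_leq kn hn1.
  by move: bK; rewrite /Kf ek ltnn.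
- move=> s hs; case: (himg s hs) => [[u hu ->]|[u hu ->]]; first by left; exists u.
  right; case: (img u hu) => [AG|[i /andP[i1 ik] aiG]].
    by exists k; [rewrite k1 ltnSn | exact: alka].
  by exists i => //; rewrite i1 (ltn_trans ik).
Qed.

Lemma stage_all k : (1 <= k <= n)%N -> Stage k.
Proof.
elim: k => [//|k IH] /andP[_ kn].
case: (posnP k) => [->|k0]; first exact: stage1.
apply: stageS; first by rewrite k0.
by apply: IH; rewrite k0 ltnW.
Qed.

Lemma main_res : exists (p : nat -> P) (al : nat -> R -> P),
    [/\ p 0%N = p0, p n = pn, concat_jordan_arc n al p,
        (forall i, (1 <= i < n)%N -> a' i.+1 (p i) /\ trace (al i) (p i))
      & (forall i, (1 <= i <= n)%N -> trace (al i) `<=` a i)].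
Proof.
have hnn : (1 <= n <= n)%N by rewrite leqnn andbT; exact: ltnW.
have [p [al [G [t [[[Gc Gj G0 G1 t0] [tn tm Gt tr tb]] pz alP a'P [_ _ _ pnk _]]]]]] := stage_all n hnn.
have u11 : unit_itv R 1 by rewrite /unit_itv /= lexx ler01.
exists p, al; split => //.
- exact: pnk.
- split.
    by move=> i hi; have [? ? ? _] := alP i hi; split.
  by exists G, t; split => //; split => //.
- move=> i /andP[i1 iN]; split; first exact: a'P (introT andP (conj i1 (ltnW iN))) iN.
  have [_ _ h1 _] := alP i (introT andP (conj i1 (ltnW iN))).
  by exists 1.
- by move=> i hi; have [_ _ _ h] := alP i hi.
Qed.
End Main.

Theorem lemma5p6 (R : realType) (n : nat) (a a' a'' : nat -> set (R * R)) :
  (2 <= n)%N ->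
  (forall i, (1 <= i <= n)%N ->
     regular_closed (a i) /\ regular_closed (a' i) /\ regular_closed (a'' i) /\
     a'' i !=set0 /\
     a'' i `&` closure (~` a' i) = set0 /\
     a' i `&` closure (~` a i) = set0) ->
  (forall i, (1 <= i <= n.-1)%N ->
     connected (a' i `|` \bigcup_(j in [set j | (i < j <= n)%N]) a'' j)) ->
  connected (a' n) ->
  (forall i j, (1 <= i <= n)%N -> (1 <= j <= n)%N -> (i.+1 < j)%N ->
     a i `&` a j = set0) ->
  forall p0 pn : R * R, a' 1%N p0 -> a'' n pn ->
  exists (p : nat -> R * R) (al : nat -> R -> R * R),
    [/\ p 0%N = p0, p n = pn, concat_jordan_arc n al p,
        (forall i, (1 <= i < n)%N -> a' i.+1 (p i) /\ trace (al i) (p i))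
      & (forall i, (1 <= i <= n)%N -> trace (al i) `<=` a i)].
Proof.
move=> hn H1 Hc Hcn Hd p0 pn hp0 hpn.
exact: (@main_res R n a a' a'' hn H1 Hc Hcn Hd p0 pn hp0 hpn).
Qed.
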